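(* Every $(2P_3,C_4,C_6,C_7,\text{3-pentagon})$-free graph is $(\text{3PC},\text{proper wheel})$-free, i.e. it contains no induced subgraph that is a theta, a pyramid, a prism, or a proper wheel.
   Context: Graphs are finite, simple, nonnull. A graph is $(H_1,\dots,H_m)$-free if it has no induced subgraph isomorphic to any $H_i$. $P_k$, $C_k$ are the path and cycle on $k$ vertices; $2P_3$ is two disjoint copies of $P_3$. The 3-pentagon is the graph on vertices $a,b_1,b_2,b_3,c_1,c_2,c_3$ where $a$ is adjacent to each $b_i$ and to no $c_i$, $\{b_1,b_2,b_3\}$ is stable, $\{c_1,c_2,c_3\}$ is a clique, and $b_ic_j$ is an edge iff $i=j$. A hole is an induced cycle on at least four vertices. A theta is any subdivision of $K_{2,3}$ (including $K_{2,3}$). A pyramid is any subdivision of $K_4$ in which one triangle remains unsubdivided and, of the remaining three edges, at least two are subdivided at least once. A prism is any subdivision of $\overline{C_6}$ (the complement of $C_6$, including $\overline{C_6}$ itself) in which the two triangles remain unsubdivided. A 3PC is a theta, pyramid, or prism. A wheel is a graph consisting of a hole and an additional vertex with at least three neighbours in the hole; it is universal if that vertex is adjacent to all vertices of the hole, a twin wheel if it is adjacent to exactly three consecutive vertices of the hole and no others, and proper if it is neither universal nor a twin wheel. *)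

(* Defs.v *)
From mathcomp Require Import all_boot.
Set Implicit Arguments. Unset Strict Implicit. Unset Printing Implicit Defensive.

Definition simple_graph (T : finType) (e : rel T) : Prop :=
  symmetric e /\ irreflexive e.

Definition induced_copy (H : finType) (eH : rel H) (T : finType) (e : rel T) : Prop :=
  exists f : H -> T, injective f /\ forall u v, eH u v = e (f u) (f v).

Definition edges_rel (n : nat) (E : seq (nat * nat)) : rel 'I_n :=
  fun u v => ((nat_of_ord u, nat_of_ord v) \in E) || ((nat_of_ord v, nat_of_ord u) \in E).

Definition cycle_rel (k : nat) : rel 'I_k :=
  fun u v => (u.+1 %% k == v) || (v.+1 %% k == u).

Definition twoP3_rel : rel 'I_6 := @edges_rel 6 [:: (0,1); (1,2); (3,4); (4,5)].

(* 3-pentagon on 'I_7 : a = 0, b_i = i (i=1,2,3), c_i = i+3. *)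
Definition three_pentagon_rel : rel 'I_7 :=
  @edges_rel 7 [:: (0,1); (0,2); (0,3); (4,5); (4,6); (5,6); (1,4); (2,5); (3,6)].

Definition path_adj (T : eqType) (p : seq T) (x y : T) : bool :=
  ((x, y) \in zip p (behead p)) || ((y, x) \in zip p (behead p)).

(* Theta: nonadjacent a, b joined by three paths a - p_i - b with nonempty
   interiors p_i, pairwise disjoint; the subgraph induced on all these
   vertices has exactly the path edges (= induced subdivision of K_{2,3}). *)
Definition is_theta (T : finType) (e : rel T) (a b : T) (p1 p2 p3 : seq T) : Prop :=
  let V := a :: b :: p1 ++ p2 ++ p3 in
  [/\ uniq V, p1 != [::], p2 != [::], p3 != [::] &
      {in V &, forall x y, e x y =
         [|| path_adj (a :: rcons p1 b) x y, path_adj (a :: rcons p2 b) x y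
           | path_adj (a :: rcons p3 b) x y]}].

(* Pyramid: triangle b1 b2 b3, apex a, paths a - p_i - b_i, at least two of
   which have length >= 2 (nonempty interior). *)
Definition is_pyramid (T : finType) (e : rel T) (a b1 b2 b3 : T) (p1 p2 p3 : seq T) : Prop :=
  let V := a :: b1 :: b2 :: b3 :: p1 ++ p2 ++ p3 in
  [/\ uniq V,
      2 <= (p1 != [::]) + (p2 != [::]) + (p3 != [::]) &
      {in V &, forall x y, e x y =
         [|| path_adj [:: b1; b2; b3; b1] x y,
             path_adj (a :: rcons p1 b1) x y, path_adj (a :: rcons p2 b2) x y
           | path_adj (a :: rcons p3 b3) x y]}].

Definition is_prism (T : finType) (e : rel T) (a1 a2 a3 b1 b2 b3 : T) (p1 p2 p3 : seq T) : Prop :=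
  let V := a1 :: a2 :: a3 :: b1 :: b2 :: b3 :: p1 ++ p2 ++ p3 in
  [/\ uniq V &
      {in V &, forall x y, e x y =
         [|| path_adj [:: a1; a2; a3; a1] x y, path_adj [:: b1; b2; b3; b1] x y,
             path_adj (a1 :: rcons p1 b1) x y, path_adj (a2 :: rcons p2 b2) x y
           | path_adj (a3 :: rcons p3 b3) x y]}].

Definition has_theta (T : finType) (e : rel T) : Prop :=
  exists a b p1 p2 p3, is_theta e a b p1 p2 p3.
Definition has_pyramid (T : finType) (e : rel T) : Prop :=
  exists a b1 b2 b3 p1 p2 p3, is_pyramid e a b1 b2 b3 p1 p2 p3.
Definition has_prism (T : finType) (e : rel T) : Prop :=
  exists a1 a2 a3 b1 b2 b3 p1 p2 p3, is_prism e a1 a2 a3 b1 b2 b3 p1 p2 p3.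

Definition is_hole (T : finType) (e : rel T) (c : seq T) : Prop :=
  [/\ uniq c, 4 <= size c &
      {in c &, forall x y, e x y = (next c x == y) || (next c y == x)}].

Definition nbrs_in (T : finType) (e : rel T) (x : T) (c : seq T) : {set T} :=
  [set z | (z \in c) && e x z].

Definition is_wheel (T : finType) (e : rel T) (c : seq T) (x : T) : Prop :=
  [/\ is_hole e c, x \notin c & 3 <= #|nbrs_in e x c|].

Definition universal_wheel (T : finType) (e : rel T) (c : seq T) (x : T) : Prop :=
  is_wheel e c x /\ {in c, forall z, e x z}.

Definition twin_wheel (T : finType) (e : rel T) (c : seq T) (x : T) : Prop :=
  is_wheel e c x /\
  exists2 y, y \in c & nbrs_in e x c = [set y; next c y; next c (next c y)].

Definition proper_wheel (T : finType) (e : rel T) (c : seq T) (x : T) : Prop :=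
  [/\ is_wheel e c x, ~ universal_wheel e c x & ~ twin_wheel e c x].

Definition has_proper_wheel (T : finType) (e : rel T) : Prop :=
  exists c x, proper_wheel e c x.

(* Main.v *)
Require Import Defs.
From mathcomp Require Import all_boot.
From mathcomp Require Import zify.
Set Implicit Arguments. Unset Strict Implicit. Unset Printing Implicit Defensive.

Lemma cyc_big (T : finType) (e : rel T) n :
  8 <= n -> induced_copy (@cycle_rel n) e -> induced_copy twoP3_rel e.
Proof.
case: n => [//|n] Hn [f [finj Hf]].
pose g (k : 'I_6) : 'I_n.+1 := inord (nth 0 [:: 0; 1; 2; 4; 5; 6] k).
have gv : forall k : 'I_6, (g k : nat) = nth 0 [:: 0; 1; 2; 4; 5; 6] k.
  move=> k; rewrite /g inordK //; case: k => [[|[|[|[|[|[|k]]]]]] hk] //=; lia.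
exists (f \o g); split.
  move=> u v /finj /(congr1 val) /= ; rewrite !gv => h; apply/val_inj.
  move: u v h => [[|[|[|[|[|[|u]]]]]] hu] [[|[|[|[|[|[|v]]]]]] hv] //=.
move=> u v; rewrite /= -Hf /cycle_rel !gv.
have m : forall k, k < 8 -> k %% n.+1 = k by move=> k hk; rewrite modn_small //; lia.
move: u v => [[|[|[|[|[|[|u]]]]]] hu] [[|[|[|[|[|[|v]]]]]] hv] //=; rewrite ?m //.
Qed.
Lemma next_nth_uniq (T : eqType) (y : T) (c : seq T) i :
  uniq c -> i < size c -> next c (nth y c i) = nth y c (i.+1 %% size c).
Proof.
move=> u hi; rewrite next_nth mem_nth // index_uniq //.
case: c u hi => [//|z c] u hi /=.
have [->|ne] := eqVneq i (size c).
  by rewrite modnn /= nth_default.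
rewrite modn_small /=; last by simpl in hi; lia.
apply: set_nth_default; simpl in hi; lia.
Qed.

Lemma hole_copy (T : finType) (e : rel T) c :
  is_hole e c -> induced_copy (@cycle_rel (size c)) e.
Proof.
case=> u hs he; case: c u hs he => [//|y c'] u hs he.
set c := y :: c' in u hs he *.
exists (fun i : 'I_(size c) => nth y c i); split.
  by move=> i j /eqP; rewrite (nth_uniq y (ltn_ord i) (ltn_ord j) u) => /eqP /val_inj.
move=> i j; rewrite he ?mem_nth // !next_nth_uniq // !nth_uniq //.
all: by rewrite ltn_mod; case: (size c) hs.
Qed.

Definition hyps (T : finType) (e : rel T) :=
  simple_graph e /\ [/\ ~ induced_copy twoP3_rel e, ~ induced_copy (@cycle_rel 4) e,
      ~ induced_copy (@cycle_rel 6) e, ~ induced_copy (@cycle_rel 7) e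
    & ~ induced_copy three_pentagon_rel e].

Lemma hole5 (T : finType) (e : rel T) c : hyps e -> is_hole e c -> size c = 5.
Proof.
case=> _ [h2 h4 h6 h7 _] hh; have := hole_copy hh; case: hh => _ hs _.
have [big|] := leqP 8 (size c).
  by move/(cyc_big big).
move: (size c) hs => n hs hn; case: n hs hn => [|[|[|[|[|[|[|[|n]]]]]]]] //.
Qed.




Section PA.
Variable T : eqType.
Implicit Types (x y u v w : T) (s r t : seq T).

Definition edge2 u v x y := ((x == u) && (y == v)) || ((x == v) && (y == u)).

Lemma pa_cons v r x y : path_adj (v :: r) x y =
  (if r is w :: _ then edge2 v w x y else false) || path_adj r x y.
Proof.
rewrite /path_adj; case: r => [|w r] //=.
rewrite !in_cons /edge2 !xpair_eqE.
case: (x == v); case: (y == w); case: (x == w); case: (y == v); case: ((x, y) \in zip (w :: r) r); by case: ((y, x) \in zip (w :: r) r).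
Qed.

Lemma pa_sym s x y : path_adj s x y = path_adj s y x.
Proof. by rewrite /path_adj orbC. Qed.

Lemma pa_catr s u t x y :
  path_adj (rcons s u ++ t) x y = path_adj (rcons s u) x y || path_adj (u :: t) x y.
Proof.
elim: s => [|v s IH] /=; first by rewrite /path_adj.
rewrite pa_cons IH [path_adj (v :: _) _ _]pa_cons -orbA; congr (_ || _).
by case: s {IH}.
Qed.

Lemma pa_rev s x y : path_adj (rev s) x y = path_adj s x y.
Proof.
elim: s => [|v s IH] //; rewrite rev_cons.
case: s IH => [|w s] IH //.
rewrite rev_cons -cats1 pa_catr -rev_cons IH.
rewrite [path_adj (v :: _) _ _]pa_cons orbC; congr (_ || _).
rewrite pa_cons /= /edge2 /path_adj /= !orbF; by rewrite orbC.
Qed.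

Lemma pa_mem s x y : path_adj s x y -> (x \in s) && (y \in s).
Proof.
elim: s => [|v s IH] //; rewrite pa_cons; case/orP.
  case: s {IH} => [|w s] // /orP [] /andP [/eqP -> /eqP ->].
  1-2: by rewrite !in_cons !eqxx ?orbT.
by case/IH/andP => hx hy; rewrite !inE hx hy !orbT.
Qed.

Lemma pa_neq s x y : uniq s -> path_adj s x y -> x != y.
Proof.
elim: s => [|v s IH] //= /andP [vs us]; rewrite pa_cons; case/orP; last exact: IH.
case: s {IH} vs us => [|w s] // vs _.
case/orP => /andP [/eqP -> /eqP ->]; apply/eqP => h; move: vs; by rewrite h inE eqxx.
Qed.

Lemma zip_memP s t x y : uniq s -> size s = size t ->
  ((x, y) \in zip s t) = (x \in s) && (y == nth y t (index x s)).
Proof.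
elim: s t => [|a s IH] [|b t] //= /andP [ns us] [st].
rewrite (in_cons (a, b)) xpair_eqE IH // in_cons.
have [->|ne] := eqVneq x a; first by rewrite (negbTE ns) /= ?orbF.
by [].
Qed.

Lemma zip_rcons_l s t a : size t = size s -> zip (rcons s a) t = zip s t.
Proof. by elim: s t => [|b s IH] [|c t] //= [/IH ->]. Qed.

Lemma pa_cycle y0 s x y : uniq (y0 :: s) -> x \in y0 :: s -> y \in y0 :: s ->
  path_adj (rcons (y0 :: s) y0) x y = (next (y0 :: s) x == y) || (next (y0 :: s) y == x).
Proof.
move=> u hx hy; rewrite /path_adj.
have -> : behead (rcons (y0 :: s) y0) = rcons s y0 by [].
rewrite zip_rcons_l ?size_rcons //.
have key : forall x y, x \in y0 :: s ->
   ((x, y) \in zip (y0 :: s) (rcons s y0)) = (next (y0 :: s) x == y).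
  move=> x' y' hx'; rewrite zip_memP ?size_rcons // hx' next_nth hx' /=.
  rewrite nth_rcons; have := index_mem x' (y0 :: s); rewrite hx' /= ltnS leq_eqVlt.
  case/orP => [/eqP ->|lt]; first by rewrite ltnn eqxx nth_default.
  by rewrite lt (set_nth_default y0).
by rewrite !key.
Qed.
End PA.


Lemma ghl (T : finType) (e : rel T) y0 s : hyps e -> uniq (y0 :: s) -> 3 < size (y0 :: s) ->
  {in y0 :: s &, forall x y, e x y = path_adj (rcons (y0 :: s) y0) x y} ->
  size (y0 :: s) = 5.
Proof.
move=> H u hs he; apply: (hole5 H); split => // x y hx hy.
by rewrite he // pa_cycle.
Qed.

Lemma pa_ends (T : eqType) (a b : T) p x y : uniq (a :: rcons p b) -> p != [::] ->
  path_adj (a :: rcons p b) x y -> (x \in p) || (y \in p).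
Proof.
move=> u pn hp; have := pa_mem hp; have := pa_neq u hp.
rewrite !in_cons !mem_rcons !in_cons.
have ab : forall x y, (x == a) || (x == b) -> (y == a) || (y == b) -> x != y ->
    path_adj (a :: rcons p b) x y = false.
  move=> x' y' hx' hy' ne.
  have E : path_adj (a :: rcons p b) a b = false.
    case: p pn u {hp} => [//|w p] _ /= /andP [].
    rewrite !in_cons mem_rcons in_cons negb_or => /andP [naw /norP [nab nap]] /andP [].
    rewrite mem_rcons in_cons negb_or => /andP [nwb _] _.
    rewrite pa_cons /edge2 eqxx /= (eq_sym b) (negbTE nwb) (negbTE naw) /=.
    apply/negP => /pa_mem /andP [].
    by rewrite in_cons mem_rcons in_cons (negbTE naw) (negbTE nab) (negbTE nap).
  move: ne; case/orP: hx' => /eqP ->; case/orP: hy' => /eqP -> //; rewrite ?eqxx //.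
  by rewrite pa_sym.
move=> ne /andP [].
case: (x \in p) => //; case: (y \in p) => //; rewrite !orbF => hx hy.
by rewrite ab // in hp; rewrite orbC.
Qed.

Lemma uniq_path (T : eqType) (a b : T) q r :
  uniq (a :: b :: q ++ r) -> uniq (a :: rcons r b).
Proof.
move=> u; have : uniq (a :: b :: r).
  by apply: subseq_uniq u; rewrite /= !eqxx suffix_subseq.
have P : perm_eq (a :: rcons r b) (a :: b :: r) by rewrite perm_cons perm_rcons.
by rewrite (perm_uniq P).
Qed.

Lemma theta_pair (T : finType) (e : rel T) a b p1 p2 p3 : hyps e ->
  uniq (a :: b :: p1 ++ p2 ++ p3) -> p1 != [::] -> p2 != [::] -> p3 != [::] ->
  {in a :: b :: p1 ++ p2 ++ p3 &, forall x y, e x y =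
     [|| path_adj (a :: rcons p1 b) x y, path_adj (a :: rcons p2 b) x y
       | path_adj (a :: rcons p3 b) x y]} ->
  size p1 + size p2 = 3.
Proof.
move=> H u n1 n2 n3 he.
have u3 : uniq (a :: rcons p3 b) by apply: (uniq_path (q := p1 ++ p2)); rewrite -catA.
set c := a :: (p1 ++ b :: rev p2).
have pc : perm_eq c (a :: b :: p1 ++ p2).
  rewrite /c perm_cons -cat1s perm_catCA /= perm_cons.
  by rewrite perm_cat2l perm_rev.
have eV : a :: b :: p1 ++ p2 ++ p3 = (a :: b :: p1 ++ p2) ++ p3 by rewrite /= catA.
have := u; rewrite eV cat_uniq => /and3P [uX /hasPn dX _].
have disj : forall z, z \in c -> z \notin p3.
  move=> z; rewrite (perm_mem pc) => hz; apply/negP => /dX; by rewrite hz.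
have inV : forall z, z \in c -> z \in a :: b :: p1 ++ p2 ++ p3.
  by move=> z; rewrite (perm_mem pc) eV mem_cat => ->.
have uc : uniq c by rewrite (perm_uniq pc).
have sc : size c = (size p1 + size p2).+2.
  by rewrite /c /= size_cat /= size_rev addnS.
suff : size c = 5 by rewrite sc => -[].
apply: (ghl H uc).
  by rewrite sc; move: n1 n2; rewrite -!size_eq0; lia.
move=> x y hx hy; rewrite he ?inV //.
have -> : rcons c a = rcons (a :: p1) b ++ rcons (rev p2) a by rewrite cat_rcons /c /= rcons_cat.
rewrite pa_catr.
have -> : b :: rcons (rev p2) a = rev (a :: rcons p2 b) by rewrite rev_cons rev_rcons.
rewrite pa_rev.
have -> : path_adj (a :: rcons p3 b) x y = false.
  apply/negP => /(pa_ends u3 n3) /orP [] h; [move: (disj _ hx) | move: (disj _ hy)]; by rewrite h.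
by rewrite orbF.
Qed.

Ltac bcase := repeat (match goal with |- context [path_adj ?s ?x ?y] => case: (path_adj s x y) end).

Lemma theta_swap23 (T : finType) (e : rel T) a b p1 p2 p3 :
  is_theta e a b p1 p2 p3 -> is_theta e a b p1 p3 p2.
Proof.
case=> u n1 n2 n3 he.
have P : perm_eq [:: a, b & p1 ++ p3 ++ p2] [:: a, b & p1 ++ p2 ++ p3].
  by rewrite !perm_cons perm_cat2l perm_catC.
split => //; first by rewrite (perm_uniq P).
move=> x y hx hy; rewrite he -?(perm_mem P) //; bcase; done.
Qed.

Lemma theta_swap12 (T : finType) (e : rel T) a b p1 p2 p3 :
  is_theta e a b p1 p2 p3 -> is_theta e a b p2 p1 p3.
Proof.
case=> u n1 n2 n3 he.
have P : perm_eq [:: a, b & p2 ++ p1 ++ p3] [:: a, b & p1 ++ p2 ++ p3].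
  by rewrite !perm_cons perm_catCA.
split => //; first by rewrite (perm_uniq P).
move=> x y hx hy; rewrite he -?(perm_mem P) //; bcase; done.
Qed.

Lemma no_theta (T : finType) (e : rel T) : hyps e -> ~ has_theta e.
Proof.
move=> H [a [b [p1 [p2 [p3 th]]]]].
have E := fun p1 p2 p3 (t : is_theta e a b p1 p2 p3) =>
  let: And5 u n1 n2 n3 he := t in theta_pair H u n1 n2 n3 he.
have e12 := E _ _ _ th.
have e13 := E _ _ _ (theta_swap23 th).
have e23 := E _ _ _ (theta_swap23 (theta_swap12 th)).
lia.
Qed.


Lemma edge2C (T : eqType) (u v x y : T) : edge2 u v x y = edge2 v u x y.
Proof. by rewrite /edge2 orbC. Qed.

Lemma edge2_nv (T : eqType) (u v x y : T) : x != v -> y != v -> edge2 u v x y = false.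
Proof. by rewrite /edge2 => /negbTE -> /negbTE ->; rewrite !andbF. Qed.

Lemma tri_eq (T : eqType) (u v w x y : T) :
  path_adj [:: u; v; w; u] x y = [|| edge2 u v x y, edge2 v w x y | edge2 w u x y].
Proof. by rewrite !pa_cons /path_adj /= !orbF. Qed.

Ltac bcase2 := repeat (match goal with
  | |- context [path_adj ?s ?x ?y] => case: (path_adj s x y)
  | |- context [edge2 ?u ?v ?x ?y] => case: (edge2 u v x y) end).

Lemma pyr_pair (T : finType) (e : rel T) a b1 b2 b3 p1 p2 p3 : hyps e ->
  uniq [:: a, b1, b2, b3 & p1 ++ p2 ++ p3] -> 0 < size p1 + size p2 ->
  {in [:: a, b1, b2, b3 & p1 ++ p2 ++ p3] &, forall x y, e x y =
     [|| path_adj [:: b1; b2; b3; b1] x y,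
         path_adj (a :: rcons p1 b1) x y, path_adj (a :: rcons p2 b2) x y
       | path_adj (a :: rcons p3 b3) x y]} ->
  size p1 + size p2 = 2.
Proof.
move=> H u n12 he.
set c := a :: (p1 ++ b1 :: b2 :: rev p2).
set X := [:: a, b1, b2 & p1 ++ p2].
have pc : perm_eq c X.
  apply/permP => P; rewrite /c /X /= !count_cat /= count_rev; lia.
have PV : perm_eq [:: a, b1, b2, b3 & p1 ++ p2 ++ p3] (b3 :: p3 ++ X).
  apply/permP => P; rewrite /X /= !count_cat /= ?count_cat; lia.
have := u; rewrite (perm_uniq PV) => uV.
have := uV; rewrite /= cat_uniq => /andP [nb3 /and3P [_ /hasPn dX uX]].
have u3 : uniq (a :: rcons p3 b3).
  have P : perm_eq (a :: rcons p3 b3) (b3 :: p3 ++ [:: a]).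
    apply/permP => P; rewrite /= count_cat -cats1 count_cat /=; lia.
  rewrite (perm_uniq P); apply: subseq_uniq uV; rewrite /= eqxx cat_subseq //.
  by rewrite sub1seq /X in_cons eqxx.
have disj : forall z, z \in c -> (z != b3) && (z \notin p3).
  move=> z; rewrite (perm_mem pc) => hz; apply/andP; split.
    by apply/eqP => ez; move: nb3; rewrite -ez mem_cat hz orbT.
  exact: dX.
have inV : forall z, z \in c -> z \in [:: a, b1, b2, b3 & p1 ++ p2 ++ p3].
  by move=> z; rewrite (perm_mem PV) (perm_mem pc) in_cons mem_cat => ->; rewrite !orbT.
have uc : uniq c by rewrite (perm_uniq pc).
have sc : size c = (size p1 + size p2).+3.
  by rewrite /c /= size_cat /= size_rev !addnS.
suff : size c = 5 by rewrite sc => -[].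
apply: (ghl H uc); first by rewrite sc; lia.
move=> x y hx hy.
have -> : rcons c a = rcons (a :: p1) b1 ++ (b2 :: rcons (rev p2) a)
  by rewrite cat_rcons /c /= rcons_cat.
rewrite pa_catr [path_adj (b1 :: _) x y]pa_cons.
have -> : b2 :: rcons (rev p2) a = rev (a :: rcons p2 b2) by rewrite rev_cons rev_rcons.
rewrite pa_rev he ?inV // tri_eq.
case/andP: (disj _ hx) => xb3 xp3; case/andP: (disj _ hy) => yb3 yp3.
rewrite (edge2C b3 b1) !(edge2_nv _ xb3 yb3).
have -> : path_adj (a :: rcons p3 b3) x y = false.
  apply/negP => hp; have := pa_neq u3 hp; have /andP [] := pa_mem hp.
  rewrite !in_cons !mem_rcons !in_cons (negbTE xb3) (negbTE yb3) (negbTE xp3) (negbTE yp3) !orbF.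
  by move=> /eqP -> /eqP ->; rewrite eqxx.
rewrite !orbF; bcase2; done.
Qed.

Lemma pyr_swap23 (T : finType) (e : rel T) a b1 b2 b3 p1 p2 p3 :
  is_pyramid e a b1 b2 b3 p1 p2 p3 -> is_pyramid e a b1 b3 b2 p1 p3 p2.
Proof.
case=> u n he.
have P : perm_eq [:: a, b1, b3, b2 & p1 ++ p3 ++ p2] [:: a, b1, b2, b3 & p1 ++ p2 ++ p3].
  apply/permP => P; rewrite /= !count_cat /=; lia.
split; first by rewrite (perm_uniq P).
  move: n; case: (p1 != [::]); case: (p2 != [::]); case: (p3 != [::]) => //.
move=> x y hx hy; rewrite he -?(perm_mem P) // !tri_eq.
rewrite (edge2C b3 b2) (edge2C b2 b1) (edge2C b3 b1); bcase2; done.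
Qed.

Lemma pyr_swap12 (T : finType) (e : rel T) a b1 b2 b3 p1 p2 p3 :
  is_pyramid e a b1 b2 b3 p1 p2 p3 -> is_pyramid e a b2 b1 b3 p2 p1 p3.
Proof.
case=> u n he.
have P : perm_eq [:: a, b2, b1, b3 & p2 ++ p1 ++ p3] [:: a, b1, b2, b3 & p1 ++ p2 ++ p3].
  apply/permP => P; rewrite /= !count_cat /=; lia.
split; first by rewrite (perm_uniq P).
  move: n; case: (p1 != [::]); case: (p2 != [::]); case: (p3 != [::]) => //.
move=> x y hx hy; rewrite he -?(perm_mem P) // !tri_eq.
rewrite (edge2C b2 b1) (edge2C b1 b3) (edge2C b3 b2); bcase2; done.
Qed.

Lemma pyr_sizes (T : finType) (e : rel T) a b1 b2 b3 p1 p2 p3 : hyps e ->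
  is_pyramid e a b1 b2 b3 p1 p2 p3 -> [/\ size p1 = 1, size p2 = 1 & size p3 = 1].
Proof.
move=> H th.
have E := fun b1 b2 b3 p1 p2 p3 (t : is_pyramid e a b1 b2 b3 p1 p2 p3) =>
  let: And3 u n he := t in
  fun (h : 0 < size p1 + size p2) => pyr_pair H u h he.
have e12 := E _ _ _ _ _ _ th.
have e13 := E _ _ _ _ _ _ (pyr_swap23 th).
have e23 := E _ _ _ _ _ _ (pyr_swap23 (pyr_swap12 th)).
case: th => _ n _; move: n e12 e13 e23; rewrite -!size_eq0.
case: (size p1) => [|n1]; case: (size p2) => [|n2]; case: (size p3) => [|n3] //= => _ h1 h2 h3; move: (h1 ltac:(lia)) (h2 ltac:(lia)) (h3 ltac:(lia)) => *; first [ split; lia | exfalso; lia ].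
Qed.


Lemma no_pyramid (T : finType) (e : rel T) : hyps e -> ~ has_pyramid e.
Proof.
move=> H [a [b1 [b2 [b3 [p1 [p2 [p3 th]]]]]]].
have [s1 s2 s3] := pyr_sizes H th.
move: s1 s2 s3 th; case: p1 => [|m1 []] //; case: p2 => [|m2 []] //; case: p3 => [|m3 []] // _ _ _.
case=> u _ he.
case: H => _ [_ _ _ _ no3]; apply: no3.
set L := [:: a; m1; m2; m3; b1; b2; b3].
have PL : perm_eq L [:: a, b1, b2, b3 & [:: m1] ++ [:: m2] ++ [:: m3]].
  apply/permP => P; rewrite /= ; lia.
have uL : uniq L by rewrite (perm_uniq PL).
pose f k := nth a L k.
have veq : forall i j, i < 7 -> j < 7 -> (f i == f j) = (i == j).
  by move=> i j hi hj; rewrite /f nth_uniq.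
have inL : forall i, i < 7 -> f i \in [:: a, b1, b2, b3 & [:: m1] ++ [:: m2] ++ [:: m3]].
  by move=> i hi; rewrite -(perm_mem PL) /f mem_nth.
exists (fun i : 'I_7 => f i); split.
  by move=> i j /eqP; rewrite veq // => /eqP /val_inj.
move=> i j; rewrite he ?inL // tri_eq /= !pa_cons /=.
rewrite (_ : a = f 0) // (_ : m1 = f 1) // (_ : m2 = f 2) // (_ : m3 = f 3) //.
rewrite (_ : b1 = f 4) // (_ : b2 = f 5) // (_ : b3 = f 6) //.
rewrite /edge2 !veq //.
rewrite (_ : path_adj [::] _ _ = false) //.
by case: i => [[|[|[|[|[|[|[|i]]]]]]] hi] //; case: j => [[|[|[|[|[|[|[|j]]]]]]] hj].
Qed.


Lemma prism_pair (T : finType) (e : rel T) a1 a2 a3 b1 b2 b3 p1 p2 p3 : hyps e ->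
  is_prism e a1 a2 a3 b1 b2 b3 p1 p2 p3 -> size p1 + size p2 = 1.
Proof.
move=> H [u he].
set c := a1 :: (p1 ++ b1 :: b2 :: rcons (rev p2) a2).
set X := [:: a1, a2, b1, b2 & p1 ++ p2].
have pc : perm_eq c X.
  apply/permP => P; rewrite /c /X /= !count_cat /= -cats1 count_cat count_rev /=; lia.
have PV : perm_eq [:: a1, a2, a3, b1, b2, b3 & p1 ++ p2 ++ p3] [:: a3, b3 & p3 ++ X].
  apply/permP => P; rewrite /X /= !count_cat /= ?count_cat; lia.
have := u; rewrite (perm_uniq PV) => uV.
have := uV; rewrite /= cat_uniq in_cons negb_or => /andP [/andP [_ na3] /andP [nb3 /and3P [_ /hasPn dX uX]]].
have disj : forall z, z \in c -> [&& z != a3, z != b3 & z \notin p3].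
  move=> z hz0; have hz : z \in X by rewrite -(perm_mem pc).
  apply/and3P; split.
  - by apply/eqP => ez; move: na3; rewrite -ez mem_cat hz orbT.
  - by apply/eqP => ez; move: nb3; rewrite -ez mem_cat hz orbT.
  - exact: dX.
have inV : forall z, z \in c -> z \in [:: a1, a2, a3, b1, b2, b3 & p1 ++ p2 ++ p3].
  move=> z hz0; have hz : z \in X by rewrite -(perm_mem pc).
  by rewrite (perm_mem PV) !in_cons mem_cat hz !orbT.
have uc : uniq c by rewrite (perm_uniq pc).
have sc : size c = (size p1 + size p2).+4.
  by rewrite /c /= size_cat /= size_rcons size_rev !addnS.
suff : size c = 5 by rewrite sc => -[].
apply: (ghl H uc); first by rewrite sc; lia.
move=> x y hx hy.
have -> : rcons c a1 = rcons (a1 :: p1) b1 ++ (b2 :: rcons (rcons (rev p2) a2) a1)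
  by rewrite cat_rcons /c /= rcons_cat.
rewrite pa_catr [path_adj (b1 :: _) x y]pa_cons.
have -> : b2 :: rcons (rcons (rev p2) a2) a1 = rcons (b2 :: rev p2) a2 ++ [:: a1].
  by rewrite cats1.
rewrite pa_catr.
have -> : rcons (b2 :: rev p2) a2 = rev (a2 :: rcons p2 b2) by rewrite rev_cons rev_rcons.
rewrite pa_rev [path_adj [:: a2; a1] x y]pa_cons.
have -> : path_adj [:: a1] x y = false by [].
rewrite he ?inV // !tri_eq.
case/and3P: (disj _ hx) => xa3 xb3 xp3; case/and3P: (disj _ hy) => ya3 yb3 yp3.
rewrite (edge2C a3 a1) (edge2C b3 b1) !(edge2_nv _ xb3 yb3) !(edge2_nv _ xa3 ya3).
have -> : path_adj (a3 :: rcons p3 b3) x y = false.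
  apply/negP => /pa_mem /andP [] + _.
  by rewrite !in_cons !mem_rcons !in_cons (negbTE xb3) (negbTE xa3) (negbTE xp3).
rewrite (edge2C a2 a1) !orbF; bcase2; done.
Qed.

Lemma prism_swap23 (T : finType) (e : rel T) a1 a2 a3 b1 b2 b3 p1 p2 p3 :
  is_prism e a1 a2 a3 b1 b2 b3 p1 p2 p3 -> is_prism e a1 a3 a2 b1 b3 b2 p1 p3 p2.
Proof.
case=> u he.
have P : perm_eq [:: a1, a3, a2, b1, b3, b2 & p1 ++ p3 ++ p2]
                 [:: a1, a2, a3, b1, b2, b3 & p1 ++ p2 ++ p3].
  apply/permP => P; rewrite /= !count_cat /=; lia.
split; first by rewrite (perm_uniq P).
move=> x y hx hy; rewrite he -?(perm_mem P) // !tri_eq.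
rewrite (edge2C a3 a2) (edge2C a2 a1) (edge2C a3 a1).
rewrite (edge2C b3 b2) (edge2C b2 b1) (edge2C b3 b1); bcase2; done.
Qed.

Lemma prism_swap12 (T : finType) (e : rel T) a1 a2 a3 b1 b2 b3 p1 p2 p3 :
  is_prism e a1 a2 a3 b1 b2 b3 p1 p2 p3 -> is_prism e a2 a1 a3 b2 b1 b3 p2 p1 p3.
Proof.
case=> u he.
have P : perm_eq [:: a2, a1, a3, b2, b1, b3 & p2 ++ p1 ++ p3]
                 [:: a1, a2, a3, b1, b2, b3 & p1 ++ p2 ++ p3].
  apply/permP => P; rewrite /= !count_cat /=; lia.
split; first by rewrite (perm_uniq P).
move=> x y hx hy; rewrite he -?(perm_mem P) // !tri_eq.
rewrite (edge2C a2 a1) (edge2C a1 a3) (edge2C a3 a2).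
rewrite (edge2C b2 b1) (edge2C b1 b3) (edge2C b3 b2); bcase2; done.
Qed.

Lemma no_prism (T : finType) (e : rel T) : hyps e -> ~ has_prism e.
Proof.
move=> H [a1 [a2 [a3 [b1 [b2 [b3 [p1 [p2 [p3 th]]]]]]]]].
have e12 := prism_pair H th.
have e13 := prism_pair H (prism_swap23 th).
have e23 := prism_pair H (prism_swap23 (prism_swap12 th)).
lia.
Qed.


Lemma no_wheel (T : finType) (e : rel T) : hyps e -> ~ has_proper_wheel e.
Proof.
move=> H [c [x [[hh xc hcard] nu ntw]]].
have hs5 := hole5 H hh; case: (hh) => uc _ he.
case: H => [[sym irr] [_ h4 _ _ _]].
pose f k := nth x c k.
have veq : forall i j, i < 5 -> j < 5 -> (f i == f j) = (i == j).
  by move=> i j hi hj; rewrite /f nth_uniq ?hs5.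
have fin : forall i, i < 5 -> f i \in c by move=> i hi; rewrite /f mem_nth ?hs5.
have cf : forall z, z \in c -> exists2 i, i < 5 & z = f i.
  move=> z hz; exists (index z c); first by rewrite -hs5 index_mem.
  by rewrite /f nth_index.
have adj : forall i j, i < 5 -> j < 5 ->
    e (f i) (f j) = ((i.+1 %% 5 == j) || (j.+1 %% 5 == i)).
  move=> i j hi hj; rewrite he ?fin // /f !next_nth_uniq ?hs5 //.
  by rewrite -/(f _) -/(f _) -/(f _) -/(f _) !veq // ltn_mod.
have xf : forall i, i < 5 -> (x == f i) = false.
  by move=> i hi; apply/negbTE/eqP => ee; move: xc; rewrite ee fin.
have C4 : forall i j k, i < 5 -> j < 5 -> k < 5 -> i != k ->
    e (f i) (f j) -> e (f j) (f k) -> e (f i) (f k) = false ->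
    e x (f i) -> e x (f k) -> e x (f j) = false -> False.
  move=> i j k hi hj hk nik Eij Ejk Eik Exi Exk Exj; apply: h4.
  have nij : (f i == f j) = false by apply/negbTE/eqP => ee; move: Eij; rewrite ee irr.
  have njk : (f j == f k) = false by apply/negbTE/eqP => ee; move: Ejk; rewrite ee irr.
  have nik' : (f i == f k) = false by rewrite veq // (negbTE nik).
  pose L := [:: x; f i; f j; f k].
  have uL : uniq L by rewrite /L /= !inE !xf // nij nik' njk.
  exists (fun t : 'I_4 => nth x L t); split.
    by move=> t u /eqP; rewrite nth_uniq // => /eqP /val_inj.
  have Eji := Eij; rewrite sym in Eji.
  have Ekj := Ejk; rewrite sym in Ekj.
  have Eki := Eik; rewrite sym in Eki.
  have Eix := Exi; rewrite sym in Eix.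
  have Ekx := Exk; rewrite sym in Ekx.
  have Ejx := Exj; rewrite sym in Ejx.
  move=> t u; case: t => [[|[|[|[|t]]]] ht] //; case: u => [[|[|[|[|u]]]] hu] //=;
    by rewrite ?irr ?Eij ?Eji ?Ejk ?Ekj ?Eik ?Eki ?Exi ?Eix ?Exk ?Ekx ?Exj ?Ejx.
have TW : forall k, k < 5 ->
    (forall i, i < 5 -> e x (f i) = [|| i == k, i == k.+1 %% 5 | i == k.+2 %% 5]) -> False.
  move=> k hk Hb; apply: ntw; split => //; exists (f k); first by apply fin.
  have nx : forall i, i < 5 -> next c (f i) = f (i.+1 %% 5).
    by move=> i hi; rewrite /f next_nth_uniq ?hs5.
  rewrite nx // nx ?ltn_mod //.
  apply/setP => z; rewrite !inE; case: (boolP (z \in c)) => hz /=.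
    have [i hi ->] := cf z hz; rewrite Hb // !veq ?ltn_mod //.
    by case: k hk {Hb} => [|[|[|[|[|]]]]] //; case: i hi => [|[|[|[|[|]]]]].
  apply/esym/negbTE; rewrite !negb_or; apply/andP; split; [apply/andP; split|];
    by apply/negP => /eqP ee; move: hz; rewrite ee fin ?ltn_mod.
have ce : c = [:: f 0; f 1; f 2; f 3; f 4].
  apply: (@eq_from_nth _ x) => [|i]; first by rewrite hs5.
  by rewrite hs5; case: i => [|[|[|[|[|]]]]].
have card : #|nbrs_in e x c| = size (filter (e x) c).
  rewrite /nbrs_in.
  have -> : [set z | (z \in c) && e x z] = [set z in filter (e x) c].
    by apply/setP => z; rewrite !inE mem_filter andbC.
  by rewrite cardsE; apply/card_uniqP; rewrite filter_uniq.
have UN : (forall i, i < 5 -> e x (f i)) -> False.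
  move=> hb; apply: nu; split => // z /cf [i hi ->]; exact: hb.
move: hcard; rewrite card ce /=.
case E0 : (e x (f 0)); case E1 : (e x (f 1)); case E2 : (e x (f 2));
  case E3 : (e x (f 3)); case E4 : (e x (f 4)) => //= _.
all: first [
    by apply: UN => i; case: i => [|[|[|[|[|]]]]] // _
  | by apply: (TW 0) => // i; case: i => [|[|[|[|[|]]]]] // _
  | by apply: (TW 1) => // i; case: i => [|[|[|[|[|]]]]] // _
  | by apply: (TW 2) => // i; case: i => [|[|[|[|[|]]]]] // _
  | by apply: (TW 3) => // i; case: i => [|[|[|[|[|]]]]] // _
  | by apply: (TW 4) => // i; case: i => [|[|[|[|[|]]]]] // _
  | by apply: (C4 0 1 2); rewrite ?adj
  | by apply: (C4 1 2 3); rewrite ?adj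
  | by apply: (C4 2 3 4); rewrite ?adj
  | by apply: (C4 3 4 0); rewrite ?adj
  | by apply: (C4 4 0 1); rewrite ?adj ].
Qed.


Theorem proposition6p1 (T : finType) (e : rel T) :
  simple_graph e ->
  ~ induced_copy twoP3_rel e ->
  ~ induced_copy (@cycle_rel 4) e ->
  ~ induced_copy (@cycle_rel 6) e ->
  ~ induced_copy (@cycle_rel 7) e ->
  ~ induced_copy three_pentagon_rel e ->
  [/\ ~ has_theta e, ~ has_pyramid e, ~ has_prism e & ~ has_proper_wheel e].
Proof.
move=> sg h2 h4 h6 h7 h3.
have H : hyps e by split.
split; [exact: no_theta | exact: no_pyramid | exact: no_prism | exact: no_wheel].
Qed.
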